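(* Let $p$ be a prime, $k\ge1$, $\Gamma=\mathbb{Z}_p\,\mathrm{wr}\,\mathbb{Z}^k=\Sigma\rtimes_\alpha\mathbb{Z}^k$, and let $\phi:\Gamma\to\Gamma$ be an automorphism with restriction $\phi'=\phi|_\Sigma$ and induced automorphism $\overline{\phi}:\mathbb{Z}^k\to\mathbb{Z}^k$ on $\Gamma/\Sigma\cong\mathbb{Z}^k$, such that $\phi'(\delta_0)=m\,\delta_0$ for some $0\ne m\in\mathbb{Z}_p$ (so $\phi'(\delta_x)=m\,\delta_{\overline{\phi}(x)}$ for all $x$). Let $x\in\mathbb{Z}^k$ have infinite $\overline{\phi}$-orbit, and let $B=\bigoplus_{n\in\mathbb{Z}}A_{\overline{\phi}^n(x)}\subset\Sigma$, which is invariant under $1-\phi'$. Then the restriction of $1-\phi'$ to $B$ is not an epimorphism onto $B$.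
   Context: $\mathbb{Z}_p\,\mathrm{wr}\,\mathbb{Z}^k$ is $\Sigma\rtimes_\alpha\mathbb{Z}^k$ with $\Sigma=\bigoplus_{x\in\mathbb{Z}^k}A_x$ (finitely supported), $A_x\cong\mathbb{Z}_p$ generated by $\delta_x$, and $\alpha(y)(\delta_x)=\delta_{y+x}$. $\Sigma$ is characteristic (torsion subgroup). Here $1-\phi'$ denotes the endomorphism $h\mapsto h-\phi'(h)$ of the abelian group $\Sigma$. *)

(* Defs.v *)
From mathcomp Require Import all_boot all_order all_algebra.
Set Implicit Arguments. Unset Strict Implicit. Unset Printing Implicit Defensive.
Import GRing.Theory.
Local Open Scope ring_scope.

(* An element of Sigma is a finitely
   supported function Z^k -> Z_p.  The wreath product Gamma = Sigma x| Z^k is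
   modelled as the subset of pairs (sigma, y) with sigma finitely supported,
   with the semidirect product law (alpha(y) tau)(w) = tau (w - y). *)

Definition finsupp (p k : nat) (f : 'rV[int]_k -> 'Z_p) : Prop :=
  exists s : seq 'rV[int]_k, forall y, f y != 0 -> y \in s.

Definition WR (p k : nat) : Type := (('rV[int]_k -> 'Z_p) * 'rV[int]_k)%type.

Definition inWR (p k : nat) (g : WR p k) : Prop := finsupp g.1.

Definition wr_mul (p k : nat) (g h : WR p k) : WR p k :=
  (fun w => g.1 w + h.1 (w - g.2), g.2 + h.2).

Definition is_aut (p k : nat) (phi : WR p k -> WR p k) : Prop :=
  [/\ (forall g, inWR g -> inWR (phi g)),
      (forall g h, inWR g -> inWR h -> phi g = phi h -> g = h),
      (forall g, inWR g -> exists h, inWR h /\ phi h = g) &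
      (forall g h, inWR g -> inWR h -> phi (wr_mul g h) = wr_mul (phi g) (phi h))].

Definition delta (p k : nat) (x : 'rV[int]_k) : 'rV[int]_k -> 'Z_p :=
  fun w => (w == x)%:R.

(* phi' = restriction of phi to Sigma = {(sigma, 0)} (Sigma is characteristic) *)
Definition restr (p k : nat) (phi : WR p k -> WR p k) (s : 'rV[int]_k -> 'Z_p)
  : 'rV[int]_k -> 'Z_p := (phi (s, 0)).1.

(* induced automorphism on Gamma/Sigma = Z^k (quotient map = second projection) *)
Definition induced (p k : nat) (phi : WR p k -> WR p k) (x : 'rV[int]_k)
  : 'rV[int]_k := (phi (fun _ => 0, x)).2.

(* y lies in the Z-orbit of x under the bijection f: y = f^n x for some n in Z *)
Definition in_orbit (k : nat) (f : 'rV[int]_k -> 'rV[int]_k) (x y : 'rV[int]_k)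
  : Prop := exists n : nat, iter n f x = y \/ iter n f y = x.

Definition infinite_orbit (k : nat) (f : 'rV[int]_k -> 'rV[int]_k) (x : 'rV[int]_k)
  : Prop := ~ exists s : seq 'rV[int]_k, forall y, in_orbit f x y -> y \in s.

Definition inB (p k : nat) (f : 'rV[int]_k -> 'rV[int]_k) (x : 'rV[int]_k)
  (s : 'rV[int]_k -> 'Z_p) : Prop :=
  finsupp s /\ forall y, s y != 0 -> in_orbit f x y.

(* Main.v *)
Require Import Defs.
From mathcomp Require Import all_boot all_order all_algebra.
From Stdlib Require Import FunctionalExtensionality Classical.
From mathcomp Require Import zify.
Set Implicit Arguments. Unset Strict Implicit. Unset Printing Implicit Defensive.
Import GRing.Theory Num.Theory.
Local Open Scope ring_scope.

Lemma finsupp0 p k : @finsupp p k (fun _ => 0).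
Proof. by exists [::] => y; rewrite eqxx. Qed.

Lemma finsupp_op p k (F : 'Z_p -> 'Z_p -> 'Z_p) (a b : 'rV[int]_k -> 'Z_p) :
  F 0 0 = 0 -> finsupp a -> finsupp b -> finsupp (fun w => F (a w) (b w)).
Proof.
move=> F0 [sa ha] [sb hb]; exists (sa ++ sb) => y; rewrite mem_cat.
case: (eqVneq (a y) 0) => [ay|/ha -> //]; case: (eqVneq (b y) 0) => [by0|/hb ->]; last by rewrite orbT.
by rewrite ay by0 F0 eqxx.
Qed.

Lemma finsupp_shift p k (b : 'rV[int]_k -> 'Z_p) c :
  finsupp b -> finsupp (fun w => b (w - c)).
Proof.
move=> [sb hb]; exists (map (fun y => y + c) sb) => y /hb H.
by apply/mapP; exists (y - c) => //; rewrite subrK.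
Qed.

Lemma inWR_mul p k (g h : WR p k) : inWR g -> inWR h -> inWR (wr_mul g h).
Proof.
rewrite /inWR /= => hg hh.
apply: (@finsupp_op p k (fun a b => a + b) g.1 (fun w => h.1 (w - g.2))) => //.
  by rewrite addr0.
exact: finsupp_shift.
Qed.

Definition e0 p k : WR p k := (fun _ => 0, 0).

Lemma inWR_e0 p k : inWR (e0 p k).
Proof. exact: finsupp0. Qed.

Lemma phi_e0 p k phi : @is_aut p k phi -> phi (e0 p k) = e0 p k.
Proof.
case=> _ _ _ hom.
have := hom _ _ (inWR_e0 p k) (inWR_e0 p k).
have -> : wr_mul (e0 p k) (e0 p k) = e0 p k.
  rewrite /wr_mul /e0 /=; congr pair; last by rewrite addr0.
  by apply: functional_extensionality => w; rewrite addr0.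
case: (phi (e0 p k)) => a y; rewrite /wr_mul /= => [[ha hy]].
have y0 : y = 0 by apply: (@addrI _ y); rewrite addr0 -hy.
subst y; rewrite /e0; congr pair; apply: functional_extensionality => w.
have := congr1 (fun f => f w) ha => /= /eqP; rewrite subr0.
by rewrite -{1}(addr0 (a w)) eq_sym => /eqP /addrI ->.
Qed.

Definition pw p k (g : WR p k) n := iter n (wr_mul g) (e0 p k).

Lemma inWR_pw p k (g : WR p k) n : inWR g -> inWR (pw g n).
Proof. move=> hg; elim: n => [|n IH] /=; [exact: inWR_e0 | exact: inWR_mul]. Qed.

Lemma phi_pw p k phi (g : WR p k) n : is_aut phi -> inWR g ->
  phi (pw g n) = pw (phi g) n.
Proof.
move=> ha hg; elim: n => [|n IH] /=; first exact: phi_e0.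
case: ha => _ _ _ hom. by rewrite hom ?IH //; exact: inWR_pw.
Qed.

Lemma pw2 p k (g : WR p k) n : (pw g n).2 = g.2 *+ n.
Proof. by elim: n => [|n IH] /=; rewrite ?mulr0n // IH mulrS. Qed.

Lemma pw_sig p k (s : 'rV[int]_k -> 'Z_p) n :
  pw (s, 0) n = (fun w => s w *+ n, 0).
Proof.
elim: n => [|n IH] /=.
  by rewrite /e0; congr pair; apply: functional_extensionality => w; rewrite mulr0n.
rewrite IH /wr_mul /=; congr pair; last by rewrite addr0.
by apply: functional_extensionality => w; rewrite subr0 mulrS.
Qed.

Lemma rv_tors k (p : nat) (y : 'rV[int]_k) : (0 < p)%N -> y *+ p = 0 -> y = 0.
Proof.
move=> p0 hy; apply/matrixP => i j; rewrite mxE.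
have := congr1 (fun M : 'M_(1,k) => M i j) hy; rewrite /= mulmxnE mxE => /eqP.
rewrite mulrn_eq0 orbC; case: eqP => // _ /=; by rewrite eqn0Ngt p0.
Qed.

Lemma zp_tors p (a : 'Z_p) : prime p -> a *+ p = 0.
Proof. by move=> hp; rewrite -mulr_natr pchar_Zp ?mulr0 // prime_gt1. Qed.
Lemma pw_sig_e0 p k (s : 'rV[int]_k -> 'Z_p) : prime p -> pw (s, 0) p = e0 p k.
Proof.
move=> hp; rewrite pw_sig /e0; congr pair.
by apply: functional_extensionality => w; rewrite zp_tors.
Qed.

Lemma sig_pres p k phi (s : 'rV[int]_k -> 'Z_p) : prime p -> is_aut phi ->
  finsupp s -> (phi (s, 0)).2 = 0.
Proof.
move=> hp ha hs.
have := phi_pw p ha (g := (s, 0)) hs; rewrite pw_sig_e0 // phi_e0 // => /(congr1 snd).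
rewrite pw2 /= => /esym; apply: rv_tors; exact: prime_gt0.
Qed.

Lemma sig_refl p k phi (g : WR p k) : prime p -> is_aut phi ->
  inWR g -> (phi g).2 = 0 -> g.2 = 0.
Proof.
move=> hp ha hg h2.
have e1 : phi (pw g p) = phi (e0 p k).
  rewrite phi_pw // phi_e0 // [phi g]surjective_pairing h2; exact: pw_sig_e0.
have := ha; case=> _ inj _ _.
have := inj _ _ (inWR_pw p hg) (inWR_e0 p k) e1 => /(congr1 snd).
rewrite pw2 /=; apply: rv_tors; exact: prime_gt0.
Qed.

Lemma restr_add p k phi (s t : 'rV[int]_k -> 'Z_p) : prime p -> is_aut phi ->
  finsupp s -> finsupp t ->
  restr phi (fun w => s w + t w) = (fun w => restr phi s w + restr phi t w).
Proof.
move=> hp ha hs ht; rewrite /restr.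
have -> : (fun w => s w + t w, 0) = wr_mul (s, 0) (t, 0).
  rewrite /wr_mul /=; congr pair; last by rewrite addr0.
  by apply: functional_extensionality => w; rewrite subr0.
have := ha; case=> _ _ _ hom; rewrite hom //.
by rewrite /wr_mul /= (sig_pres hp ha hs); apply: functional_extensionality => w; rewrite subr0.
Qed.

Lemma restr0 p k phi : is_aut phi -> restr phi (fun _ : 'rV[int]_k => 0 : 'Z_p) = (fun _ => 0).
Proof. by move=> ha; rewrite /restr -/(e0 p k) phi_e0. Qed.

Lemma restr_muln p k phi (s : 'rV[int]_k -> 'Z_p) n : prime p -> is_aut phi ->
  finsupp s -> restr phi (fun w => s w *+ n) = (fun w => restr phi s w *+ n).
Proof.
move=> hp ha hs; elim: n => [|n IH].
  have -> : (fun w => s w *+ 0) = (fun _ => 0).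
    by apply: functional_extensionality => w; rewrite mulr0n.
  by rewrite restr0 //; apply: functional_extensionality => w; rewrite mulr0n.
have -> : (fun w => s w *+ n.+1) = (fun w => s w + s w *+ n).
  by apply: functional_extensionality => w; rewrite mulrS.
rewrite restr_add //; last first.
  by apply: (@finsupp_op p k (fun a _ => a *+ n) s s) => //; rewrite mul0rn.
by rewrite IH; apply: functional_extensionality => w; rewrite mulrS.
Qed.

Lemma finsupp_delta p k (y : 'rV[int]_k) : finsupp (@delta p k y).
Proof. by exists [:: y] => w; rewrite /delta inE; case: (w =P y) => // _; rewrite eqxx. Qed.

Lemma restr_delta p k phi m (y : 'rV[int]_k) : prime p -> is_aut phi ->
  restr phi (@delta p k 0) = (fun w => m * @delta p k 0 w) ->
  restr phi (@delta p k y) = (fun w => m * @delta p k (induced phi y) w).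
Proof.
move=> hp ha hd.
have E : wr_mul (fun _ => 0, y) (@delta p k 0, 0) = wr_mul (@delta p k y, 0) (fun _ => 0, y).
  rewrite /wr_mul /=; congr pair; last by rewrite addr0 add0r.
  apply: functional_extensionality => w; by rewrite /delta add0r addr0 subr_eq0.
have := ha; case=> _ _ _ hom.
have i1 : inWR ((fun _ => 0, y) : WR p k) by exact: finsupp0.
have i2 : inWR ((@delta p k 0, 0) : WR p k) by exact: finsupp_delta.
have i3 : inWR ((@delta p k y, 0) : WR p k) by exact: finsupp_delta.
move: E => /(congr1 phi); rewrite !hom //.
have s2 := sig_pres hp ha (finsupp_delta p 0).
have s3 := sig_pres hp ha (finsupp_delta p y).
rewrite [phi (@delta p k 0, 0)]surjective_pairing [phi (@delta p k y, 0)]surjective_pairing.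
rewrite s2 s3 -/(restr phi (@delta p k 0)) -/(restr phi (@delta p k y)) hd.
rewrite [phi (fun _ => 0, y)]surjective_pairing -/(induced phi y).
rewrite /wr_mul /= => /(congr1 fst) /= E.
apply: functional_extensionality => w.
have := congr1 (fun f => f w) E; rewrite /= subr0 addrC => /addIr <-.
by rewrite /delta subr_eq0.
Qed.
Lemma f_inj p k phi : prime p -> is_aut phi -> injective (@induced p k phi).
Proof.
move=> hp ha z1 z2 hz.
have := ha; case=> pres inj surj hom.
have i1 : inWR ((fun _ => 0, z1) : WR p k) by exact: finsupp0.
have i2 : inWR ((fun _ => 0, z2) : WR p k) by exact: finsupp0.
set c := - induced phi z1.
set s1 := (phi (fun _ => 0, z1)).1. set s2 := (phi (fun _ => 0, z2)).1.
have f1 : finsupp s1 := pres _ i1. have f2 : finsupp s2 := pres _ i2.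
have ft : finsupp (fun w => s2 (w - c) - s1 (w - c)).
  apply: (@finsupp_op p k (fun a b => a - b)) => //; [by rewrite subr0 | |];
  exact: finsupp_shift.
have [g [ig pg]] := surj (fun w => s2 (w - c) - s1 (w - c), 0) ft.
have g2 : g.2 = 0 by apply: (sig_refl hp ha ig); rewrite pg.
have E : phi (wr_mul (fun _ => 0, z1) g) = phi (fun _ => 0, z2).
  rewrite hom // pg [phi (fun _ => 0, z1)]surjective_pairing [phi (fun _ => 0, z2)]surjective_pairing.
  rewrite -/s1 -/s2 -/(induced phi z1) -/(induced phi z2) /wr_mul /=.
  congr pair; last by rewrite addr0.
  apply: functional_extensionality => w.
  by rewrite /c opprK subrK addrC subrK.
have := inj _ _ (inWR_mul i1 ig) i2 E => /(congr1 snd); rewrite /= g2 addr0 //.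
Qed.
Lemma restr_formula p k phi m : prime p -> is_aut phi ->
  restr phi (@delta p k 0) = (fun w => m * @delta p k 0 w) ->
  forall (s : seq 'rV[int]_k) (h : 'rV[int]_k -> 'Z_p), (forall y, h y != 0 -> y \in s) ->
  (forall y, restr phi h (induced phi y) = m * h y) /\
  (forall w, (forall y, induced phi y != w) -> restr phi h w = 0).
Proof.
move=> hp ha hd; elim=> [|a s IH] h hs.
  have -> : h = (fun _ => 0).
    by apply: functional_extensionality => w; apply/eqP; apply: contraT => /hs.
  by rewrite restr0 //; split=> [y|]; rewrite ?mulr0.
set h' : 'rV[int]_k -> 'Z_p := fun w => if w == a then 0 else h w.
have hs' : forall y, h' y != 0 -> y \in s.
  move=> y; rewrite /h'; case: (y =P a) => [_|ya]; first by rewrite eqxx.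
  by move=> hy; have := hs y hy; rewrite inE; case: eqP.
have fh' : finsupp h' by exists s.
have -> : h = (fun w => h' w + delta p a w *+ h a).
  apply: functional_extensionality => w; rewrite /h' /delta.
  case: eqP => [->|_]; last by rewrite mul0rn addr0.
  by rewrite add0r mulr1n natr_Zp.
have [IH1 IH2] := IH h' hs'.
rewrite restr_add //; last first.
  by apply: (@finsupp_op p k (fun x _ => x *+ h a) (delta p a) (delta p a)); rewrite ?mul0rn //; exact: finsupp_delta.
rewrite restr_muln //; last exact: finsupp_delta.
rewrite (restr_delta _ hp ha hd); split.
  move=> y; rewrite IH1 /h' /delta (inj_eq (f_inj hp ha)).
  by rewrite mulrDr -mulrnAr.
move=> w hw; rewrite IH2 // add0r /delta; case: (w =P induced phi a) => [e|_]; last by rewrite mulr0 mul0rn.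
by move: (hw a); rewrite e eqxx.
Qed.
Lemma m_reg p (m a : 'Z_p) : prime p -> m != 0 -> m * a = 0 -> a = 0.
Proof.
move=> hp hm hma.
have mu : m \is a GRing.unit.
  rewrite -(natr_Zp m) unitZpE ?prime_gt1 // prime_coprime // gtnNdvd //.
    by rewrite lt0n; apply: contraNneq hm => hm0; apply/eqP/val_inj.
  by have := ltn_ord m; rewrite [X in (_ < X)%N -> _]Zp_cast // prime_gt1.
by apply: (mulrI mu); rewrite hma mulr0.
Qed.

Lemma iter_injective T (f : T -> T) n : injective f -> injective (iter n f).
Proof. by move=> fi; elim: n => [|n IH] //= a b /fi /IH. Qed.

Lemma pigeon (T : eqType) (z : nat -> T) (s : seq T) :
  (forall n, z n \in s) -> (forall i j, (i < j)%N -> z i != z j) -> False.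
Proof.
move=> zs zd.
have u : uniq (map z (iota 0 (size s).+1)).
  rewrite map_inj_in_uniq ?iota_uniq // => i j _ _ e.
  case: (ltngtP i j) => // ij; [by move: (zd _ _ ij); rewrite e eqxx | by move: (zd _ _ ij); rewrite e eqxx].
have sub : {subset map z (iota 0 (size s).+1) <= s}.
  by move=> y /mapP [i _ ->].
by have := uniq_leq_size u sub; rewrite size_map size_iota ltnn.
Qed.

Lemma iter_mul T (f : T -> T) x P d : iter P f x = x -> iter (d * P) f x = x.
Proof. by move=> hP; elim: d => [|d IH] //; rewrite mulSn iterD IH hP. Qed.

Lemma aperiodic k (f : 'rV[int]_k -> 'rV[int]_k) x : injective f ->
  infinite_orbit f x -> forall n, iter n.+1 f x != x.
Proof.
move=> fi hx n; apply/negP => /eqP hP; apply: hx.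
exists (map (fun i => iter i f x) (iota 0 n.+1)) => y [q [<-|hy]].
  rewrite (divn_eq q n.+1) addnC iterD iter_mul //.
  by apply/mapP; exists (q %% n.+1)%N => //; rewrite mem_iota add0n ltn_mod.
have -> : y = iter (q * n)%N f x.
  apply: (@iter_injective _ f q fi); rewrite hy -iterD addnC.
  by rewrite -mulnSr iter_mul.
rewrite (divn_eq (q * n)%N n.+1) addnC iterD iter_mul //.
by apply/mapP; exists (q * n %% n.+1)%N => //; rewrite mem_iota add0n ltn_mod.
Qed.
Theorem lemma3p2 (p k : nat) (hp : prime p) (hk : (0 < k)%N)
  (phi : WR p k -> WR p k) (haut : is_aut phi)
  (m : 'Z_p) (hm : m != 0)
  (hdelta : restr phi (@delta p k 0) = (fun w => m * @delta p k 0 w))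
  (x : 'rV[int]_k) (hx : infinite_orbit (induced phi) x) :
  ~ (forall b, inB (induced phi) x b ->
       exists h, inB (induced phi) x h /\ (fun w => h w - restr phi h w) = b).
Proof.
move=> H.
have fi := f_inj hp haut.
have ap := aperiodic fi hx.
set f := induced phi in fi ap hx H *.
have inBx : inB f x (delta p x).
  split; first exact: finsupp_delta.
  move=> y; rewrite /delta; case: (y =P x) => [->|_]; last by rewrite eqxx.
  by move=> _; exists 0%N; left.
have [h [[[s hs] _] heq]] := H _ inBx.
have E : forall w, h w - restr phi h w = delta p x w.
  by move=> w; exact: (congr1 (fun g => g w) heq).
have [F1 F2] := restr_formula hp haut hdelta hs.
have Ey : forall y, y != x -> restr phi h y = h y.
  move=> y yx; have := E y; rewrite /delta (negbTE yx) => /eqP.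
  by rewrite subr_eq0 => /eqP <-.
case: (eqVneq (h x) 0) => hx0.
  have r1 : restr phi h x != 0.
    have := E x; rewrite hx0 /delta eqxx add0r => /eqP; rewrite eqr_oppLR => /eqP ->.
    by rewrite oppr_eq0 oner_neq0.
  set g := fun y => nth x s (find (fun z => (f z == y) && (h z != 0)) s).
  have gP : forall y, restr phi h y != 0 -> f (g y) = y /\ h (g y) != 0.
    move=> y ry.
    have [[z fz]|nz] := Classical_Prop.classic (exists z, f z = y); last first.
      by move: ry; rewrite F2 ?eqxx // => z; apply/eqP => fz; apply: nz; exists z.
    have hz : h z != 0.
      apply: contraNneq ry => hz0; by rewrite -fz F1 hz0 mulr0.
    have hh : has (fun z => (f z == y) && (h z != 0)) s.
      by apply/hasP; exists z; [exact: hs | rewrite fz eqxx hz].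
    by have /andP [/eqP -> ->] := nth_find x hh.
  set z := fun n => iter n g (g x).
  have inv : forall n, h (z n) != 0 /\ iter n.+1 f (z n) = x.
    elim=> [|n [IH1 IH2]].
      by have [e1 e2] := gP x r1; split => //=; rewrite e1.
    have zx : z n != x by apply: contraNneq (ap n) => e; rewrite -{2}IH2 e.
    have [e1 e2] := gP (z n) (eq_ind_r (fun t => t != 0) IH1 (Ey _ zx)).
    split => //; rewrite iterSr; have -> : z n.+1 = g (z n) by []. by rewrite e1.
  apply: (pigeon (z := z) (s := s)) => [n|i j ij]; first by apply: hs; case: (inv n).
  apply/eqP => e; have [_ ej] := inv j; have [_ ei] := inv i.
  move: (ap (j - i.+1)%N); rewrite -{1}ei -iterD.
  have -> : ((j - i.+1).+1 + i.+1 = j.+1)%N by lia.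
  by rewrite e ej eqxx.
set z := fun n => iter n f x.
have inv : forall n, h (z n) != 0.
  elim=> [|n IH] //.
  have e : h (z n.+1) = m * h (z n).
    rewrite /z iterS -F1 -/(z n) -Ey //; exact: ap.
  rewrite e; apply: contra_neq IH; exact: m_reg hp hm.
apply: (pigeon (z := z) (s := s)) => [n|i j ij]; first exact: hs.
apply/eqP => e; move: (ap (j - i.+1)%N).
have -> : (j - i.+1).+1 = (j - i)%N by lia.
have e' : x = iter (j - i) f x.
  by apply: (@iter_injective _ f i fi); rewrite -iterD subnKC ?(ltnW ij).
by rewrite -e' eqxx.
Qed.
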